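(* Let $X=\{x_1,\dots,x_m\} \subset \mathbb{R}^n$ be a finite set of vectors, let $\alpha>0$, $\lambda \ge 0$, and $w_{ij} \ge 0$ for $j=2,\dots,m$, $i=1,\dots,j-1$. Let $z^* = \begin{bmatrix}(z_1^* )^T & \dots & (z_m^* )^T\end{bmatrix}^T \in \mathbb{R}^{mn}$ (with each $z_i^* \in \mathbb{R}^n$) be a local optimal solution of \[ \min_{z \in \mathbb{R}^{mn}} \; g(z;\alpha) := \sum_{i=1}^m \|x_i - z_i\|^2 + \lambda \sum_{j=2}^m \sum_{i=1}^{j-1} w_{ij}\Bigl(1 - e^{-\alpha \|z_i - z_j\|^2}\Bigr), \] where $z = \begin{bmatrix} z_1^T & \dots & z_m^T\end{bmatrix}^T$ with $z_i \in \mathbb{R}^n$. Then $z_1^*,\dots,z_m^*$ all lie in the convex hull of $X$.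
   Context: $\|\cdot\|$ denotes the Euclidean norm. *)

(* Defs.v *)
From mathcomp Require Import all_boot all_order all_algebra.
From mathcomp Require Import all_classical all_reals all_analysis.
Set Implicit Arguments. Unset Strict Implicit. Unset Printing Implicit Defensive.
Import Order.TTheory GRing.Theory Num.Theory.
Local Open Scope ring_scope.

Definition sqnorm (R : realType) (n : nat) (v : 'rV[R]_n) : R :=
  \sum_(k < n) (v 0 k) ^+ 2.

(* z = (z_1, ..., z_m) in R^{mn}, represented blockwise as z : 'I_m -> 'rV_n *)
Definition gobj (R : realType) (n m : nat) (x : 'I_m -> 'rV[R]_n)
  (alpha lam : R) (w : 'I_m -> 'I_m -> R) (z : 'I_m -> 'rV[R]_n) : R :=
  \sum_(i < m) sqnorm (x i - z i)
  + lam * \sum_(j < m) \sum_(i < m | (i < j)%N)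
            w i j * (1 - expR (- alpha * sqnorm (z i - z j))).

Definition bsqdist (R : realType) (n m : nat) (z z' : 'I_m -> 'rV[R]_n) : R :=
  \sum_(i < m) sqnorm (z i - z' i).

Definition local_min (R : realType) (n m : nat)
  (f : ('I_m -> 'rV[R]_n) -> R) (zs : 'I_m -> 'rV[R]_n) : Prop :=
  exists eps : R, 0 < eps /\
    forall z, bsqdist z zs < eps ^+ 2 -> f zs <= f z.

Definition in_conv_hull (R : realType) (n m : nat) (x : 'I_m -> 'rV[R]_n)
  (v : 'rV[R]_n) : Prop :=
  exists mu : 'I_m -> R, (forall k, 0 <= mu k) /\ \sum_(k < m) mu k = 1 /\
    v = \sum_(k < m) mu k *: x k.

(* Main.v *)
Require Import Defs.
From mathcomp Require Import all_boot all_order all_algebra.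
From mathcomp Require Import all_classical all_reals all_analysis.
From mathcomp.algebra_tactics Require Import ring lra.
Import Order.TTheory GRing.Theory Num.Theory.
Local Open Scope ring_scope.

Section MM.
Variables (R : realType) (m : nat) (c : 'I_m -> 'I_m -> R).
Hypothesis hc : forall i j, 0 <= c i j.

Definition Mm : 'M[R]_m :=
  diag_mx (\row_i (1 + \sum_l c i l)) - \matrix_(i, j) c i j.

Lemma MmE p (v : 'M[R]_(m, p)) i k :
  (Mm *m v) i k = v i k + \sum_j c i j * (v i k - v j k).
Proof.
rewrite mulmxBl mul_diag_mx !mxE.
rewrite [X in _ - X](eq_bigr (fun j => c i j * v j k)); last by move=> j _; rewrite mxE.
rewrite [X in _ = _ + X](eq_bigr (fun j => c i j * v i k - c i j * v j k)); last by move=> j _; rewrite mulrBr.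
rewrite sumrB -mulr_suml; ring.
Qed.

Lemma Mm_pos (v : 'cV[R]_m) : (forall i, 0 <= (Mm *m v) i 0) -> forall i, 0 <= v i 0.
Proof.
move=> h i.
case: (@arg_minP _ _ _ i predT (fun j => v j 0)) => // i0 _ hmin.
have H := h i0; rewrite MmE in H.
have : \sum_j c i0 j * (v i0 0 - v j 0) <= 0.
  apply: sumr_le0 => j _; apply: mulr_ge0_le0 => //.
  by rewrite subr_le0; apply: hmin.
have := hmin i isT; lra.
Qed.

Lemma Mm_unit : Mm \in unitmx.
Proof.
rewrite unitmxE unitfE -det_tr; apply/negP => /det0P [v vn0 hv].
move/eqP: vn0; apply; apply/matrixP => a b.
have hv' : Mm *m v^T = 0 by rewrite -[Mm]trmxK -trmx_mul hv trmx0.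
have h1 : forall i, 0 <= (v^T) i 0 by apply: Mm_pos => i; rewrite hv' mxE.
have h2 : forall i, 0 <= (- v^T) i 0.
  by apply: Mm_pos => i; rewrite mulmxN hv' oppr0 mxE.
have := h1 b; have := h2 b; rewrite !mxE (ord1 a); lra.
Qed.

Lemma Mm_conv n (x z : 'I_m -> 'rV[R]_n) :
  (forall i k, z i 0 k + \sum_j c i j * (z i 0 k - z j 0 k) = x i 0 k) ->
  forall i, in_conv_hull x (z i).
Proof.
move=> hz i.
pose Z : 'M[R]_(m, n) := \matrix_(i, k) z i 0 k.
pose X : 'M[R]_(m, n) := \matrix_(i, k) x i 0 k.
have hMZ : Mm *m Z = X.
  apply/matrixP => a b; rewrite MmE !mxE -(hz a b); congr (_ + _).
  by apply: eq_bigr => j _; rewrite !mxE.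
pose N := invmx Mm.
have hZ : Z = N *m X by rewrite -hMZ mulmxA mulVmx ?mul1mx //; exact: Mm_unit.
have Npos : forall a b, 0 <= N a b.
  move=> a b; have := @Mm_pos (col b N) _ a; rewrite !mxE; apply.
  move=> j; rewrite colE mulmxA mulmxV ?mul1mx; last exact: Mm_unit.
  by rewrite !mxE; case: (j == b).
have Nsum : forall a, \sum_k N a k = 1.
  move=> a; pose one : 'cV[R]_m := const_mx 1.
  have h1 : Mm *m one = one.
    apply/matrixP => p q; rewrite MmE !mxE big1 ?addr0 // => j _.
    by rewrite !mxE subrr mulr0.
  have h2 : N *m one = one by rewrite -{1}h1 mulmxA mulVmx ?mul1mx //; exact: Mm_unit.
  have := congr1 (fun M : 'cV[R]_m => M a 0) h2; rewrite !mxE => <-.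
  by apply: eq_bigr => k _; rewrite mxE mulr1.
exists (fun k => N i k); split => //; split => //.
apply/rowP => k; rewrite summxE.
have := congr1 (fun M : 'M[R]_(m, n) => M i k) hZ; rewrite !mxE => ->.
by apply: eq_bigr => j _; rewrite !mxE.
Qed.
End MM.
Lemma quad0 (R : realType) (L K D E : R) : 0 <= K -> 0 <= D -> 0 < E ->
  (forall t, t ^+ 2 * D < E -> 0 <= t * L + t ^+ 2 * K) -> L = 0.
Proof.
move=> hK hD hE h; apply/eqP/negPn/negP => hL.
set q := L ^+ 2.
have hq : 0 < q by rewrite /q exprn_even_gt0.
have hqD : 0 <= q * D by rewrite mulr_ge0 // ltW.
set den := (K + 2) * (q * D + E).
have hden : 0 < den by rewrite /den mulr_gt0 //; lra.
set e := E / den.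
have he : 0 < e by rewrite divr_gt0.
have he1 : e * den = E by rewrite /e mulfVK // gt_eqF.
have h2 : e * (K + 2) <= 1.
  have : e * (K + 2) * (q * D + E) = E by rewrite -mulrA.
  move=> H; have H1 : 0 <= e * (K + 2) * (q * D).
    by apply: mulr_ge0 => //; apply: mulr_ge0; lra.
  have H2 : e * (K + 2) * E <= E.
    by move: H H1; rewrite mulrDr; lra. have : (e * (K + 2) - 1) * E <= 0 by lra.
  by rewrite pmulr_lle0 // subr_le0.
have h3 : e * (q * D) <= E / 2.
  have H : e * (K + 2) * (q * D + E) = E by rewrite -mulrA.
  have : e * 2 * (q * D) <= e * (K + 2) * (q * D).
    by apply: ler_wpM2r => //; apply: ler_wpM2l; [exact: ltW | lra].
  have : e * (K + 2) * E >= 0.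
    by apply: mulr_ge0; [apply: mulr_ge0|]; lra.
  lra.
have := h (- L * e).
have -> : (- L * e) ^+ 2 * D = e * (e * (q * D)) by rewrite /q; ring.
have -> : - L * e * L + (- L * e) ^+ 2 * K = q * e * (e * K - 1) by rewrite /q; ring.
have eK : 0 <= e * K by rewrite mulr_ge0 // ltW.
have e12 : e <= 1 / 2 by move: h2; rewrite mulrDr; lra.
have : e * (e * (q * D)) <= 1/2 * (e * (q * D)) by rewrite ler_wpM2r // mulr_ge0 // ltW.
move=> H4 H5.
have : 0 <= q * e * (e * K - 1) by apply: H5; lra.
have hqe : 0 < q * e by apply: mulr_gt0.
rewrite pmulr_rge0 //; move: h2; rewrite mulrDr; lra.
Qed.
Section Vec.
Variables (R : realType) (n : nat).
Implicit Types (a b c d x z : 'rV[R]_n).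

Definition dot a b : R := \sum_k a 0 k * b 0 k.

Lemma sq1 x z d t : sqnorm (x - (z + t *: d)) =
  sqnorm (x - z) + t * (2 * dot (z - x) d) + t ^+ 2 * sqnorm d.
Proof.
rewrite /sqnorm /dot !mulr_sumr -!big_split /=; apply: eq_bigr => k _; rewrite !mxE; ring.
Qed.

Lemma sq2 a b c d t : sqnorm ((a + t *: c) - (b + t *: d)) =
  sqnorm (a - b) + t * (2 * dot (a - b) (c - d)) + t ^+ 2 * sqnorm (c - d).
Proof.
rewrite /sqnorm /dot !mulr_sumr -!big_split /=; apply: eq_bigr => k _; rewrite !mxE; ring.
Qed.

Lemma sq3 z d t : sqnorm ((z + t *: d) - z) = t ^+ 2 * sqnorm d.
Proof.
rewrite /sqnorm /dot !mulr_sumr; apply: eq_bigr => k _; rewrite !mxE; ring.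
Qed.

Lemma sqnorm_ge0 a : 0 <= sqnorm a.
Proof. by apply: sumr_ge0 => k _; rewrite sqr_ge0. Qed.

Lemma dotDl a b c : dot (a + b) c = dot a c + dot b c.
Proof. by rewrite /dot -big_split /=; apply: eq_bigr => k _; rewrite !mxE mulrDl. Qed.

Lemma dotZl s a c : dot (s *: a) c = s * dot a c.
Proof. by rewrite /dot mulr_sumr; apply: eq_bigr => k _; rewrite !mxE mulrA. Qed.

Lemma dot_suml m (f : 'I_m -> 'rV[R]_n) c :
  dot (\sum_j f j) c = \sum_j dot (f j) c.
Proof.
rewrite /dot exchange_big /=; apply: eq_bigr => k _.
by rewrite summxE mulr_suml.
Qed.

Lemma dotBsplit a b c d : dot (a - b) (c - d) = dot (a - b) c + dot (b - a) d.
Proof. by rewrite /dot -big_split /=; apply: eq_bigr => k _; rewrite !mxE; ring. Qed.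

Lemma dotvv a : dot a a = sqnorm a.
Proof. by rewrite /dot /sqnorm; apply: eq_bigr => k _; rewrite expr2. Qed.

Lemma pair_ineq (w alpha s t D Q : R) : 0 <= w ->
  w * (1 - expR (- alpha * (s + t * (2 * D) + t ^+ 2 * Q))) <=
  w * (1 - expR (- alpha * s)) + t * (w * alpha * expR (- alpha * s) * (2 * D))
  + t ^+ 2 * (w * alpha * expR (- alpha * s) * Q).
Proof.
move=> hw.
set E := expR (- alpha * s).
set u := t * (2 * D) + t ^+ 2 * Q.
have -> : - alpha * (s + t * (2 * D) + t ^+ 2 * Q) = - alpha * s + (- alpha * u).
  by rewrite /u; ring.
rewrite expRD -/E.
have hE : 0 < E := expR_gt0 _.
have hF := expR_ge1Dx (- alpha * u).
have H : 0 <= w * E * (expR (- alpha * u) - (1 + - alpha * u)).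
  by apply: mulr_ge0; [apply: mulr_ge0 => //; exact: ltW | rewrite subr_ge0].
have -> : w * (1 - E) + t * (w * alpha * E * (2 * D)) + t ^+ 2 * (w * alpha * E * Q)
  = w * (1 - E) + w * alpha * E * u by rewrite /u; ring.
move: H; set F := expR _; move=> H.
have : w * (1 - E * F) = w * (1 - E) + w * alpha * E * u - w * E * (F - (1 + - alpha * u)) by ring.
move=> ->; lra.
Qed.
End Vec.
Arguments dot {R n}.
Arguments sqnorm_ge0 {R n}.

Lemma symsum (R : realType) m (A P : 'I_m -> 'I_m -> R) :
  \sum_j \sum_i A i j * (P i j + P j i) = \sum_i \sum_j (A i j + A j i) * P i j.
Proof.
rewrite (eq_bigr (fun j => \sum_i A i j * P i j + \sum_i A i j * P j i)); last first.
  by move=> j _; rewrite -big_split /=; apply: eq_bigr => i _; rewrite mulrDr.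
rewrite [RHS](eq_bigr (fun i => \sum_j A i j * P i j + \sum_j A j i * P i j)); last first.
  by move=> i _; rewrite -big_split /=; apply: eq_bigr => j _; rewrite mulrDl.
by rewrite !big_split /= exchange_big.
Qed.

Theorem proposition1 (R : realType) (n m : nat) (x : 'I_m -> 'rV[R]_n)
  (alpha lam : R) (w : 'I_m -> 'I_m -> R) (zs : 'I_m -> 'rV[R]_n) :
  0 < alpha -> 0 <= lam ->
  (forall i j : 'I_m, (i < j)%N -> 0 <= w i j) ->
  local_min (gobj x alpha lam w) zs ->
  forall i : 'I_m, in_conv_hull x (zs i).
Proof.
move=> ha hl hw [eps [heps hmin]].
set z := zs.
pose e i j := expR (- alpha * sqnorm (z i - z j)).
pose A (i j : 'I_m) := if (i < j)%N then w i j * e i j else 0.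
have hA : forall i j, 0 <= A i j.
  move=> i j; rewrite /A; case: ifP => // hij.
  by rewrite mulr_ge0 ?hw // ltW // expR_gt0.
pose c (i j : 'I_m) := lam * alpha * (A i j + A j i).
have hc : forall i j, 0 <= c i j.
  move=> i j; apply: mulr_ge0; [apply: mulr_ge0 => //; exact: ltW | exact: addr_ge0].
apply: (@Mm_conv R m c hc n x z).
pose r (i : 'I_m) := (z i - x i) + \sum_j c i j *: (z i - z j).
suff hr : forall i, r i = 0.
  move=> i k; have := congr1 (fun v : 'rV[R]_n => v 0 k) (hr i).
  rewrite /r !mxE summxE.
  under eq_bigr do rewrite !mxE.
  lra.
pose d := r.
pose X := \sum_(j < m) \sum_(i < m | (i < j)%N) w i j * alpha * e i j * (2 * dot (z i - z j) (d i - d j)).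
pose Y := \sum_(j < m) \sum_(i < m | (i < j)%N) w i j * alpha * e i j * sqnorm (d i - d j).
pose L0 := 2 * \sum_i dot (z i - x i) (d i) + lam * X.
pose K := \sum_i sqnorm (d i) + lam * Y.
pose P (u : 'I_m -> 'rV[R]_n) := \sum_(j < m) \sum_(i < m | (i < j)%N)
            w i j * (1 - expR (- alpha * sqnorm (u i - u j))).
have bound : forall t, gobj x alpha lam w (fun i => z i + t *: d i)
    <= gobj x alpha lam w z + t * L0 + t ^+ 2 * K.
  move=> t; rewrite /gobj -/(P _) -/(P z).
  have H1 : \sum_i sqnorm (x i - (z i + t *: d i)) = \sum_i sqnorm (x i - z i)
      + t * (2 * \sum_i dot (z i - x i) (d i)) + t ^+ 2 * \sum_i sqnorm (d i).
    rewrite mulr_sumr !mulr_sumr -!big_split /=.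
    by apply: eq_bigr => i _; rewrite sq1.
  have H2 : P (fun i => z i + t *: d i) <= P z + t * X + t ^+ 2 * Y.
    rewrite /P /X /Y !mulr_sumr -!big_split /=; apply: ler_sum => j _.
    rewrite !mulr_sumr -!big_split /=; apply: ler_sum => i hij.
    by rewrite sq2 pair_ineq // hw.
  rewrite H1.
  have H3 := ler_wpM2l hl H2.
  have -> : \sum_i sqnorm (x i - z i) + lam * P z + t * L0 + t ^+ 2 * K =
     \sum_i sqnorm (x i - z i) + t * (2 * \sum_i dot (z i - x i) (d i))
     + t ^+ 2 * \sum_i sqnorm (d i) + lam * (P z + t * X + t ^+ 2 * Y).
    by rewrite /L0 /K; ring.
  by rewrite lerD2l.
have hK : 0 <= K.
  rewrite /K addr_ge0 ?sumr_ge0 // => [i _|]; first exact: sqnorm_ge0.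
  rewrite mulr_ge0 // sumr_ge0 // => j _; rewrite sumr_ge0 // => i hij.
  by rewrite mulr_ge0 ?sqnorm_ge0 // !mulr_ge0 ?hw // ltW // expR_gt0.
have hD : 0 <= \sum_i sqnorm (d i) by rewrite sumr_ge0 // => i _; exact: sqnorm_ge0.
have hL0 : L0 = 0.
  apply: (@quad0 R L0 K _ (eps ^+ 2) hK hD); first by rewrite exprn_gt0.
  move=> t ht.
  have hz := hmin (fun i => z i + t *: d i).
  have : gobj x alpha lam w z <= gobj x alpha lam w (fun i => z i + t *: d i).
    apply: hz; rewrite /bsqdist.
    rewrite (eq_bigr (fun i => t ^+ 2 * sqnorm (d i))); last by move=> i _; rewrite sq3.
    by rewrite -mulr_sumr.
  have := bound t; lra.
have hL : L0 = 2 * \sum_i dot (r i) (d i).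
  rewrite /L0 /X.
  have -> : \sum_i dot (r i) (d i) = \sum_i dot (z i - x i) (d i)
       + \sum_i \sum_j c i j * dot (z i - z j) (d i).
    rewrite -big_split /=; apply: eq_bigr => i _.
    by rewrite /r dotDl dot_suml; congr (_ + _); apply: eq_bigr => j _; rewrite dotZl.
  have -> : \sum_(j < m) \sum_(i < m | (i < j)%N) w i j * alpha * e i j * (2 * dot (z i - z j) (d i - d j))
     = 2 * alpha * \sum_j \sum_i A i j * (dot (z i - z j) (d i) + dot (z j - z i) (d j)).
    rewrite mulr_sumr; apply: eq_bigr => j _.
    rewrite mulr_sumr big_mkcond /=; apply: eq_bigr => i _.
    by rewrite /A dotBsplit; case: ifP => _; [ring | rewrite !mul0r mulr0].
  rewrite symsum.
  have -> : \sum_i \sum_j c i j * dot (z i - z j) (d i)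
     = lam * alpha * \sum_i \sum_j (A i j + A j i) * dot (z i - z j) (d i).
    rewrite mulr_sumr; apply: eq_bigr => i _.
    by rewrite mulr_sumr; apply: eq_bigr => j _; rewrite /c mulrA.
  ring.
move: hL0; rewrite hL => /eqP; rewrite mulf_eq0 pnatr_eq0 orFb => /eqP H0.
have H0' : \sum_i sqnorm (r i) = 0.
  by rewrite -[RHS]H0; apply: eq_bigr => i _; rewrite /d dotvv.
move=> i; apply/rowP => k; rewrite [RHS]mxE.
have Hi : sqnorm (r i) = 0.
  by apply: (psumr_eq0P _ H0') => // j _; exact: sqnorm_ge0.
have : r i 0 k ^+ 2 = 0.
  by apply: (psumr_eq0P _ Hi) => // j _; exact: sqr_ge0.
by move/eqP; rewrite sqrf_eq0 => /eqP.
Qed.
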